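(* Let $\ell\ge2$ and $n\ge1$ be integers with $\gcd(n,\ell)=1$. Then each switching equivalence class in $\mathrm{Alt}_n(\mathbb{Z}/\ell\mathbb{Z})$ contains exactly one isomorphism class of modular Eulerian matrices; that is, every $M\in\mathrm{Alt}_n(\mathbb{Z}/\ell\mathbb{Z})$ is switching equivalent to some modular Eulerian matrix, and any two modular Eulerian matrices that are switching equivalent are isomorphic.
   Context: $\mathrm{Alt}_n(\mathbb{Z}/\ell\mathbb{Z})$ is the set of $n\times n$ matrices $M=(m_{ij})$ over $\mathbb{Z}/\ell\mathbb{Z}$ with $m_{ii}=0$ and $m_{ij}+m_{ji}=0$. For $v\in[n]$ let $X_v$ be the matrix with $(X_v)_{iv}=1$ and $(X_v)_{vi}=-1$ for all $i\ne v$ and all other entries $0$; the switching at $v$ is $\mu_v(M)=M+X_v$. $M\cong M'$ means there is $\sigma\in\mathfrak{S}_n$ with $m'_{\sigma(i)\sigma(j)}=m_{ij}$ for all $i,j$. $M,M'$ are switching equivalent if there are positive integers $i_1,\dots,i_n$ with $M'\cong\mu_1^{i_1}\cdots\mu_n^{i_n}(M)$. $M\in\mathrm{Alt}_n(\mathbb{Z}/\ell\mathbb{Z})$ is a modular Eulerian matrix if $\sum_{j=1}^n m_{ij}=0$ in $\mathbb{Z}/\ell\mathbb{Z}$ for every $i$. *)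

(* Defs.v *)
From mathcomp Require Import all_boot all_order all_algebra perm.
Set Implicit Arguments. Unset Strict Implicit. Unset Printing Implicit Defensive.
Import GRing.Theory.
Local Open Scope ring_scope.

Definition is_alt (R : zmodType) (n : nat) (M : 'M[R]_n) : Prop :=
  (forall i, M i i = 0) /\ (forall i j, M i j + M j i = 0).

Definition Xsw (R : nzRingType) (n : nat) (v : 'I_n) : 'M[R]_n :=
  \matrix_(i, j) (if i == j then 0
                  else if j == v then 1
                  else if i == v then -1 else 0).

Definition mu (R : nzRingType) (n : nat) (v : 'I_n) (M : 'M[R]_n) : 'M[R]_n :=
  M + Xsw R v.

(* mu_1^{i_1} ... mu_n^{i_n} (M) : apply mu_n^{i_n} first, ..., mu_1^{i_1} last *)
Definition multi_switch (R : nzRingType) (n : nat) (e : 'I_n -> nat)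
    (M : 'M[R]_n) : 'M[R]_n :=
  foldr (fun v A => iter (e v) (mu v) A) M (enum 'I_n).

Definition mx_iso (R : Type) (n : nat) (M M' : 'M[R]_n) : Prop :=
  exists s : {perm 'I_n}, forall i j, M' (s i) (s j) = M i j.

Definition switching_equiv (R : nzRingType) (n : nat) (M M' : 'M[R]_n) : Prop :=
  exists e : 'I_n -> nat, (forall v, (0 < e v)%N) /\ mx_iso (multi_switch e M) M'.

Definition modular_eulerian (R : zmodType) (n : nat) (M : 'M[R]_n) : Prop :=
  is_alt M /\ (forall i, \sum_j M i j = 0).

(* Main.v *)
Require Import Defs.
From mathcomp Require Import all_boot all_order all_algebra perm.
Set Implicit Arguments. Unset Strict Implicit. Unset Printing Implicit Defensive.
Import GRing.Theory.
Local Open Scope ring_scope.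

Section Aux.
Variable R : nzRingType.
Variable n : nat.

Lemma iter_mu k (v : 'I_n) (A : 'M[R]_n) : iter k (mu v) A = A + Xsw R v *+ k.
Proof.
elim: k => [|k IH] /=; first by rewrite mulr0n addr0.
by rewrite IH /mu mulrS -addrA [Xsw R v + _]addrC.
Qed.

Lemma ms_seq (e : 'I_n -> nat) (M : 'M[R]_n) (s : seq 'I_n) :
  foldr (fun v A => iter (e v) (mu v) A) M s = M + \sum_(v <- s) Xsw R v *+ e v.
Proof.
elim: s => [|v s IH] /=; first by rewrite big_nil addr0.
by rewrite iter_mu IH big_cons -addrA [Xsw R v *+ _ + _]addrC.
Qed.

Lemma ms_eq (e : 'I_n -> nat) (M : 'M[R]_n) :
  multi_switch e M = M + \sum_v Xsw R v *+ e v.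
Proof. by rewrite /multi_switch ms_seq big_enum. Qed.

Lemma Xsw_entry (v i j : 'I_n) : Xsw R v i j = (j == v)%:R - (i == v)%:R.
Proof.
rewrite /Xsw mxE; have [->|hij] := eqVneq i j; first by rewrite subrr.
have [hjv|hjv] := eqVneq j v.
  have [hiv|] := eqVneq i v; last by rewrite /= mulr0n mulr1n subr0.
  by move: hij; rewrite hiv hjv eqxx.
have [hiv|hiv] := eqVneq i v.
- rewrite mulr0n mulr1n sub0r. done. - by rewrite subrr.
Qed.

Lemma sum_delta (e : 'I_n -> nat) (j : 'I_n) :
  \sum_v ((j == v)%:R : R) *+ e v = (e j)%:R.
Proof.
rewrite (bigD1 j) //= eqxx big1 ?addr0 //.
by move=> v hv; rewrite eq_sym (negbTE hv) mul0rn.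
Qed.

Lemma S_entry (e : 'I_n -> nat) (i j : 'I_n) :
  (\sum_v Xsw R v *+ e v) i j = (e j)%:R - (e i)%:R.
Proof.
rewrite summxE.
under eq_bigr do rewrite mulmxnE Xsw_entry mulrnBl.
by rewrite sumrB !sum_delta.
Qed.

Lemma S_rowsum (e : 'I_n -> nat) (i : 'I_n) :
  \sum_j (\sum_v Xsw R v *+ e v) i j = \sum_j (e j)%:R - (e i)%:R *+ n.
Proof.
under eq_bigr do rewrite S_entry.
by rewrite sumrB sumr_const card_ord.
Qed.

Lemma alt_total (M : 'M[R]_n) : is_alt M -> \sum_i \sum_j M i j = 0.
Proof.
case=> hd ha.
pose f (i j : 'I_n) := if (j < i)%N then M i j else 0.
pose g (i j : 'I_n) := if (i < j)%N then M i j else 0.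
have hM : forall i j, M i j = f i j + g i j.
  move=> i j; rewrite /f /g; case: ltngtP => h; rewrite ?addr0 ?add0r //.
  by have -> : i = j by apply: val_inj. 
have hg : \sum_i \sum_j g i j = - \sum_i \sum_j f i j.
  rewrite exchange_big /= -sumrN; apply: eq_bigr => i _.
  rewrite -sumrN; apply: eq_bigr => j _; rewrite /f /g.
  case: ifP => _; last by rewrite oppr0.
  by apply/eqP; rewrite -addr_eq0; apply/eqP/ha.
under eq_bigr do under eq_bigr do rewrite hM.
under eq_bigr do rewrite big_split.
by rewrite big_split /= hg subrr.
Qed.

End Aux.

Theorem theorem4p4 (ell n : nat) (hl : (1 < ell)%N) (hn : (0 < n)%N)
    (hcop : coprime n ell) :
  (forall M : 'M['Z_ell]_n, is_alt M ->
     exists M' : 'M['Z_ell]_n, modular_eulerian M' /\ switching_equiv M M') /\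
  (forall M M' : 'M['Z_ell]_n, modular_eulerian M -> modular_eulerian M' ->
     switching_equiv M M' -> mx_iso M M').
Proof.
have hu : (n%:R : 'Z_ell) \is a GRing.unit by rewrite unitZpE // coprime_sym.
have hnr : forall x : 'Z_ell, x *+ n = x * n%:R by move=> x; rewrite mulr_natr.
split.
- move=> M hM.
  pose r i := \sum_j M i j.
  pose e (v : 'I_n) := addn (val (((n%:R)^-1 * r v)%R : 'Z_ell)) ell.
  have he : forall v, (e v)%:R = (n%:R : 'Z_ell)^-1 * r v.
    by move=> v; rewrite /e natrD pchar_Zp // addr0 natr_Zp.
  exists (multi_switch e M); split; last first.
    exists e; split; first by move=> v; rewrite /e addn_gt0 orbC (ltn_trans _ hl).
    by exists 1%g => i j; rewrite !perm1.
  split.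
    case: hM => hd ha; rewrite ms_eq; split => [i|i j]; rewrite !mxE !S_entry.
      by rewrite hd subrr addr0.
    by rewrite addrACA ha add0r addrC subrKA subrr.
  move=> i; rewrite ms_eq.
  under eq_bigr do rewrite mxE.
  rewrite big_split /= S_rowsum.
  rewrite (eq_bigr _ (fun j _ => he j)).
  rewrite -mulr_sumr /r alt_total // mulr0 sub0r (he i) hnr mulrC mulrA mulrV //.
  by rewrite mul1r subrr.
- move=> M M' [hM hr] [_ hr'] [e [_ [s hs]]].
  rewrite ms_eq in hs.
  have hrow : forall i, \sum_j (e j)%:R - (e i)%:R *+ n = 0 :> 'Z_ell.
    move=> i; have := hr' (s i).
    rewrite (reindex_inj (@perm_inj _ s)) /=.
    under eq_bigr do rewrite hs mxE.
    by rewrite big_split /= hr add0r S_rowsum.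
  have hc : forall i j, (e i)%:R = (e j)%:R :> 'Z_ell.
    move=> i j; apply: (mulIr hu); rewrite -!hnr.
    move: (hrow i) (hrow j) => /eqP; rewrite subr_eq0 => /eqP <- /eqP.
    by rewrite subr_eq0 => /eqP.
  exists s => i j; rewrite hs mxE S_entry (hc j i) subrr addr0 //.
Qed.
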